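(* For any graph $G$ of order $n$ and maximum degree $\Delta=\Delta(G)\ge 2$, $$\left\lceil \frac{2n}{\Delta}\right\rceil\le \gamma_{qtR}(G)\le n-\Delta(G)+2.$$
   Context: All graphs are finite, simple and undirected. For $f:V(G)\to\{0,1,2\}$ write $V_i=\{v:f(v)=i\}$; weight $\omega(f)=|V_1|+2|V_2|$. A quasi-total Roman dominating function (QTRDF) is an $f$ such that every vertex labeled $0$ is adjacent to a vertex labeled $2$, and every vertex isolated in the subgraph induced by $V_1\cup V_2$ has label $1$; $\gamma_{qtR}(G)$ is the minimum weight of a QTRDF. *)

(* Defs.v *)
From mathcomp Require Import all_boot all_order.
Set Implicit Arguments. Unset Strict Implicit. Unset Printing Implicit Defensive.

(* A finite simple graph: vertex type T : finType, adjacency e : rel T,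
   required (in the theorem) to be symmetric and irreflexive. *)

Definition neighbours (T : finType) (e : rel T) (x : T) : {set T} :=
  [set y | e x y].

Definition deg (T : finType) (e : rel T) (x : T) : nat := #|neighbours e x|.

(* maximum degree Delta(G) (0 for the empty graph) *)
Definition maxdeg (T : finType) (e : rel T) : nat := \max_(x : T) deg e x.

Definition weight (T : finType) (f : {ffun T -> 'I_3}) : nat :=
  \sum_(v : T) (f v : nat).

Definition is_qtrdf (T : finType) (e : rel T) (f : {ffun T -> 'I_3}) : bool :=
  [forall v, ((f v : nat) == 0) ==> [exists u, e v u && ((f u : nat) == 2)]]
  && [forall v, (((f v : nat) != 0) && [forall u, e v u ==> ((f u : nat) == 0)])
                 ==> ((f v : nat) == 1)].

(* gamma_qtR(G): minimum weight of a QTRDF.  The constant function 1 is always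
   a QTRDF of weight |V| <= 2|V|, so the default 2|V| never matters. *)
Definition gamma_qtR (T : finType) (e : rel T) : nat :=
  \big[minn/(#|T|).*2]_(f : {ffun T -> 'I_3} | is_qtrdf e f) weight f.

(* Main.v *)
Require Import Defs.
From mathcomp Require Import all_boot all_order.
From mathcomp Require Import zify.

Lemma sumb (T : finType) (P : pred T) : \sum_(v : T) (P v : nat) = #|P|.
Proof.
rewrite -sum1_card [RHS]big_mkcond /=; apply: eq_bigr => v _; rewrite unfold_in; by case: (P v).
Qed.

Lemma deg_sum (T : finType) (e : rel T) u : deg e u = \sum_v (e u v : nat).
Proof. by rewrite sumb /deg /neighbours cardsE. Qed.

Lemma deg_le (T : finType) (e : rel T) u : deg e u <= maxdeg e.
Proof. rewrite /maxdeg; exact: (@leq_bigmax _ (fun x => deg e x) u). Qed.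

Lemma lower (T : finType) (e : rel T)
  (e_sym : symmetric e) (e_irr : irreflexive e) (f : {ffun T -> 'I_3}) :
  2 <= maxdeg e -> is_qtrdf e f -> (#|T|).*2 <= maxdeg e * weight f.
Proof.
move=> HD /andP [/forallP H0 /forallP H1].
set D := maxdeg e.
set a0 := #|[pred v | (f v : nat) == 0]|.
set a1 := #|[pred v | (f v : nat) == 1]|.
set a2 := #|[pred v | (f v : nat) == 2]|.
have Hn : #|T| = a0 + a1 + a2.
  rewrite -sum1_card /a0 /a1 /a2 -!sumb -!big_split /=.
  apply: eq_bigr => v _.
  case: (f v) => [[|[|[|k]]] //=].
have Hw : weight f = a1 + a2.*2.
  rewrite /weight /a1 /a2 -!sumb -muln2 big_distrl -big_split /=.
  apply: eq_bigr => v _.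
  case: (f v) => [[|[|[|k]]] //=].
have Ha0 : a0 <= a2 * D.-1.
  rewrite /a0 /a2 -sum_nat_const -sum1_card.
  apply: (@leq_trans (\sum_(v in [pred v | (f v : nat) == 0])
           \sum_(u in [pred v | (f v : nat) == 2]) (e v u : nat))).
    apply: leq_sum => v /= Hv.
    have /existsP [u /andP [Hvu Hu]] := implyP (H0 v) Hv.
    by rewrite (bigD1 u) //= Hvu.
  rewrite exchange_big /=.
  apply: leq_sum => u /= Hu.
  have : [exists w, e u w && ((f w : nat) != 0)].
    case: (boolP [exists w, e u w && ((f w : nat) != 0)]) => // Hne.
    have Hall : [forall w, e u w ==> ((f w : nat) == 0)].
      apply/forallP => w; apply/implyP => Huw.
      case: (boolP ((f w : nat) == 0)) => // Hfw.
      by move/existsP: Hne => []; exists w; rewrite Huw.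
    by move: (implyP (H1 u)); rewrite (eqP Hu) Hall => /(_ isT).
  move=> /existsP [w /andP [Huw Hfw]].
  have : deg e u <= D by apply: deg_le.
  rewrite deg_sum (bigD1 w) //= Huw.
  move=> Hd.
  have : \sum_(i | i != w) (e u i : nat) <= D.-1 by lia.
  apply: leq_trans.
  rewrite big_mkcond [X in _ <= X]big_mkcond /=.
  apply: leq_sum => v _.
  case: (eqVneq v w) => [->|Hvw] /=.
    by rewrite inE /= (negbTE Hfw).
  by case: ifP => _ //; rewrite e_sym.
rewrite Hw Hn.
nia.
Qed.

Lemma bigmin_le (I : eqType) (r : seq I) (P : pred I) (F : I -> nat) d x :
  x \in r -> P x -> \big[minn/d]_(i <- r | P i) F i <= F x.
Proof.
elim: r => // a r IH; rewrite inE big_cons => /orP [/eqP <- Px|Hx Px].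
  by rewrite Px geq_minl.
case: ifP => _; last exact: IH.
by rewrite geq_min IH ?orbT.
Qed.

Theorem mainTheorem6 (T : finType) (e : rel T)
  (e_sym : symmetric e) (e_irr : irreflexive e) :
  2 <= maxdeg e ->
  (#|T|.*2 + maxdeg e - 1) %/ maxdeg e <= gamma_qtR e /\
  gamma_qtR e <= #|T| - maxdeg e + 2.
Proof.
move=> HD; split.
  rewrite /gamma_qtR.
  apply: (big_ind (fun m => (#|T|.*2 + maxdeg e - 1) %/ maxdeg e <= m)).
  - have Hp : 0 < maxdeg e by lia.
    rewrite -ltnS ltn_divLR //. nia.
  - by move=> x y Hx Hy; rewrite leq_min Hx Hy.
  - move=> f Hf; have := @lower _ _ e_sym e_irr f HD Hf.
    move=> H.
    have Hp : 0 < maxdeg e by lia.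
    rewrite -ltnS ltn_divLR //. nia.
have [x0 _] : exists x : T, true.
  case: (pickP (fun _ : T => true)) => [x0 _|H]; first by exists x0.
  have : maxdeg e <= 0 by apply/bigmax_leqP => i; have := H i.
  lia.
have Hc : 0 < #|T| by apply/card_gt0P; exists x0.
have [x Hx] := eq_bigmax (fun x => deg e x) Hc.
have Hdx : deg e x = maxdeg e by rewrite -Hx.
have [y Hy] : exists y, y \in neighbours e x.
  apply/card_gt0P; rewrite -/(deg e x) Hdx; lia.
have Hxy : e x y by move: Hy; rewrite inE.
have Hyx : y != x by apply/eqP => Eyx; move: Hxy; rewrite Eyx e_irr.
pose f := [ffun v => (if v == x then inord 2 else
            if e x v && (v != y) then inord 0 else inord 1 : 'I_3)].
have fE : forall v, (f v : nat) = if v == x then 2 else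
            if e x v && (v != y) then 0 else 1.
  by move=> v; rewrite ffunE; case: ifP => _; [|case: ifP => _]; rewrite inordK.
have Hf : is_qtrdf e f.
  apply/andP; split; apply/forallP => v; apply/implyP; rewrite !fE.
    case: (eqVneq v x) => // Hvx.
    case: ifP => // /andP [Hxv _] _.
    apply/existsP; exists x; rewrite e_sym Hxv fE eqxx //.
  case: (eqVneq v x) => [Evx|Hvx]; last by case: ifP.
  move=> /andP [_ /forallP /(_ y) /implyP].
  by rewrite Evx Hxy fE (negbTE Hyx) Hxy eqxx => /(_ isT).
have Hw : weight f + #|[pred v | e x v && (v != y)]| = #|T| + 1.
  rewrite /weight -sumb -big_split /=.
  transitivity (\sum_(v : T) (1 + (v == x))); last first.
    by rewrite big_split /= sum1_card (@sumb _ (pred1 x)) card1.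
  apply: eq_bigr => v _.
  rewrite fE /=.
  case: (eqVneq v x) => [->|Hvx]; first by rewrite e_irr.
  by case: (e x v); case: (v == y).
have Hcard : #|[pred v | e x v && (v != y)]| = maxdeg e - 1.
  have -> : #|[pred v | e x v && (v != y)]| = #|neighbours e x :\ y|.
    by apply: eq_card => v; rewrite !inE andbC.
  by move: (cardsD1 y (neighbours e x)); rewrite Hy -/(deg e x) Hdx; lia.
have Hg : gamma_qtR e <= weight f.
  by rewrite /gamma_qtR; apply: bigmin_le => //; rewrite mem_index_enum.
lia.
Qed.
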